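(* Let $\Omega=\{A\in\mathbb{R}^{m\times m}:A=A^{\top}\}$ be the set of real symmetric matrices, let $\mathcal{P}=\{P\in\mathbb{R}^{m\times m}:P^\top=P^{-1}\}$ be the set of orthogonal matrices, let $s(A,B,P)=\|AP-PB\|$ for all $A,B\in\Omega$, $P\in\mathcal{P}$, where $\|\cdot\|$ is an orthogonally invariant matrix norm, and let $d(A,B)=\min_{P\in\mathcal{P}} s(A,B,P)$. Then the Fermat distance function $d_F$ induced by $d$, and the $\mathcal{G}$-align distance function $d_\mathcal{G}$ induced by $s$, are pseudo $n$-metrics.
   Context: For $A_1,\dots,A_n\in\Omega$, write $A_{1:n}=(A_1,\dots,A_n)$, and let $A^i_{1:n,n+1}$ denote the sequence $A_{1:n}$ with $A_i$ replaced by $A_{n+1}$. A map $d:\Omega^n\to\mathbb{R}$ is a pseudo $n$-metric if for all $A_1,\dots,A_{n+1}\in\Omega$: $d(A_{1:n})\ge 0$; $d(A,\dots,A)=0$; $d(A_{1:n})=d(A_{\sigma(1:n)})$ for every permutation $\sigma$ of the indices; and $d(A_{1:n})\le\sum_{i=1}^n d(A^i_{1:n,n+1})$. The Fermat distance function induced by $d:\Omega^2\to\mathbb{R}$ is $d_F(A_{1:n})=\min_{B\in\Omega}\sum_{i=1}^n d(A_i,B)$. The $\mathcal{G}$-align distance function induced by $s:\Omega^2\times\mathcal{P}\to\mathbb{R}$ is $d_\mathcal{G}(A_{1:n})=\min_{P\in S}\frac12\sum_{i,j\in[n]} s(A_i,A_j,P_{i,j})$, where $S=\{\{P_{i,j}\}_{i,j\in[n]}: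 P_{i,j}\in\mathcal{P}\ \forall i,j;\ P_{i,k}P_{k,j}=P_{i,j}\ \forall i,j,k;\ P_{i,i}=I\ \forall i\}$. A matrix norm is orthogonally invariant if $\|PM\|=\|MP\|=\|M\|$ for every orthogonal $P$. *)

(* Defs.v *)
From mathcomp Require Import all_boot all_order all_algebra perm.
From mathcomp Require Import all_classical all_reals.
Set Implicit Arguments. Unset Strict Implicit. Unset Printing Implicit Defensive.
Import Order.TTheory GRing.Theory Num.Theory.
Local Open Scope ring_scope.
Local Open Scope classical_set_scope.

Section Defs.
Variables (R : realType) (m : nat).
Notation M := 'M[R]_m.

Definition symmetric (A : M) : Prop := A^T = A.

Definition orthogonal (P : M) : Prop := P \in unitmx /\ P^T = invmx P.

Definition matrix_norm (N : M -> R) : Prop :=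
  [/\ forall A, 0 <= N A,
      forall A, N A = 0 -> A = 0,
      forall (c : R) A, N (c *: A) = `|c| * N A &
      forall A B, N (A + B) <= N A + N B].

Definition orth_invariant (N : M -> R) : Prop :=
  forall P A, orthogonal P -> N (P *m A) = N A /\ N (A *m P) = N A.

Definition s_fun (N : M -> R) (A B P : M) : R := N (A *m P - P *m B).

(* d(A,B) = min_{P in calP} s(A,B,P)  (rendered as an infimum) *)
Definition d_fun (N : M -> R) (A B : M) : R :=
  inf [set s_fun N A B P | P in orthogonal].

Definition fermat_dist (d : M -> M -> R) (n : nat) (A : 'I_n -> M) : R :=
  inf [set (\sum_(i < n) d (A i) B) | B in symmetric].

Definition align_family (n : nat) (P : 'I_n -> 'I_n -> M) : Prop :=
  [/\ forall i j, orthogonal (P i j),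
      forall i j k, P i k *m P k j = P i j &
      forall i, P i i = 1%:M].

Definition galign_dist (s : M -> M -> M -> R) (n : nat) (A : 'I_n -> M) : R :=
  inf [set (2^-1 * \sum_(i < n) \sum_(j < n) s (A i) (A j) (P i j))
      | P in @align_family n].

Definition pseudo_n_metric (n : nat) (d : ('I_n -> M) -> R) : Prop :=
  [/\ forall A : 'I_n -> M, (forall i, symmetric (A i)) -> 0 <= d A,
      forall A0 : M, symmetric A0 -> d (fun _ => A0) = 0,
      forall (A : 'I_n -> M) (sigma : {perm 'I_n}), (forall i, symmetric (A i)) ->
        d A = d (fun i => A (sigma i)) &
      forall (A : 'I_n -> M) (Anew : M), (forall i, symmetric (A i)) ->
        symmetric Anew ->
        d A <= \sum_(i < n) d (fun j => if j == i then Anew else A j)].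
End Defs.

(* Main.v *)
Require Import Defs.
From mathcomp Require Import all_boot all_order all_algebra perm.
From mathcomp Require Import all_classical all_reals.
From mathcomp Require Import ring lra.
Set Implicit Arguments. Unset Strict Implicit. Unset Printing Implicit Defensive.
Import Order.TTheory GRing.Theory Num.Theory.
Local Open Scope ring_scope.
Local Open Scope classical_set_scope.

Section Inf.
Variable R : realType.
Lemma inf_img_le (T : Type) (S : set T) (f : T -> R) x :
  (forall y, S y -> 0 <= f y) -> S x -> inf [set f y | y in S] <= f x.
Proof.
move=> f0 Sx; apply: ge_inf; last by exists x.
by exists 0 => _ [y Sy <-]; exact: f0.
Qed.
Lemma le_inf_img (T : Type) (S : set T) (f : T -> R) x c :
  S x -> (forall y, S y -> c <= f y) -> c <= inf [set f y | y in S].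
Proof.
move=> Sx h; apply: lb_le_inf; first by exists (f x), x.
by move=> _ [y Sy <-]; exact: h.
Qed.
End Inf.
Lemma zmod_id (V : zmodType) (a c d e : V) : a - e = (a - c) + (c - d) - (e - d).
Proof. by rewrite addrA subrK opprB addrA subrK. Qed.

Section Mat.
Variables (R : realType) (m : nat) (N : 'M[R]_m -> R).
Hypotheses (hN : matrix_norm N) (hI : orth_invariant N).
Notation orth := (@Defs.orthogonal R m).

Lemma orth1 : orth 1%:M.
Proof. by split; rewrite ?unitmx1 // trmx1 invmx1. Qed.
Lemma orthM P Q : orth P -> orth Q -> orth (P *m Q).
Proof.
move=> [uP tP] [uQ tQ]; split; first by rewrite unitmx_mul uP uQ.
have uPQ : P *m Q \in unitmx by rewrite unitmx_mul uP uQ.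
rewrite -[LHS](mulKmx uPQ) trmx_mul tP tQ -!mulmxA (mulmxA Q) mulmxV // mul1mx.
by rewrite mulmxV // mulmx1.
Qed.
Lemma orthT P : orth P -> orth P^T.
Proof.
move=> [uP tP]; split; first by rewrite unitmx_tr.
by rewrite trmxK -trmx_inv -tP trmxK.
Qed.
Lemma orthTK P : orth P -> P^T *m P = 1%:M.
Proof. by move=> [uP ->]; rewrite mulVmx. Qed.
Lemma orthKT P : orth P -> P *m P^T = 1%:M.
Proof. by move=> [uP ->]; rewrite mulmxV. Qed.

Lemma N0 : N 0 = 0.
Proof. by case: hN => _ _ hZ _; rewrite -(scale0r 0) hZ normr0 mul0r. Qed.
Lemma Nge0 A : 0 <= N A.
Proof. by case: hN. Qed.
Lemma NN A : N (- A) = N A.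
Proof. by case: hN => _ _ hZ _; rewrite -scaleN1r hZ normrN1 mul1r. Qed.
Lemma ND A B : N (A + B) <= N A + N B.
Proof. by case: hN. Qed.
Lemma NB A B : N (A - B) <= N A + N B.
Proof. by rewrite -(NN B) ND. Qed.
Lemma NL P A : orth P -> N (P *m A) = N A.
Proof. by move=> oP; case: (hI A oP). Qed.
Lemma NR P A : orth P -> N (A *m P) = N A.
Proof. by move=> oP; case: (hI A oP). Qed.

Lemma s_ge0 A B P : 0 <= s_fun N A B P.
Proof. exact: Nge0. Qed.
Lemma s_refl A : s_fun N A A 1%:M = 0.
Proof. by rewrite /s_fun mulmx1 mul1mx subrr N0. Qed.
Lemma s_sym A B P : orth P -> s_fun N B A P^T = s_fun N A B P.
Proof.
move=> oP; rewrite /s_fun -[RHS](NL _ (orthT oP)) -[RHS](NR _ (orthT oP)).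
rewrite mulmxBr mulmxBl !mulmxA -(mulmxA (P^T *m A)) orthKT // orthTK //.
by rewrite mulmx1 mul1mx -NN opprB.
Qed.
Lemma s_tri A B C P Q : orth P -> orth Q ->
  s_fun N A C (P *m Q) <= s_fun N A B P + s_fun N B C Q.
Proof.
move=> oP oQ; rewrite /s_fun.
have -> : A *m (P *m Q) - P *m Q *m C = (A *m P - P *m B) *m Q + P *m (B *m Q - Q *m C).
  rewrite mulmxBl mulmxBr !mulmxA.
  by rewrite addrA subrK.
by rewrite (le_trans (ND _ _)) // NR // NL.
Qed.

Notation d := (d_fun N).
Lemma d_le_s A B P : orth P -> d A B <= s_fun N A B P.
Proof. by move=> oP; apply: inf_img_le => // *; exact: s_ge0. Qed.
Lemma d_lb A B c : (forall P, orth P -> c <= s_fun N A B P) -> c <= d A B.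
Proof. by move=> h; apply: (le_inf_img (x := 1%:M)) => //; exact: orth1. Qed.
Lemma d_ge0 A B : 0 <= d A B.
Proof. by apply: d_lb => *; exact: s_ge0. Qed.
Lemma d_refl A : d A A = 0.
Proof. by apply/le_anti; rewrite d_ge0 andbT -(s_refl A) d_le_s //; exact: orth1. Qed.
Lemma d_sym_le A B : d B A <= d A B.
Proof. by apply: d_lb => P oP; rewrite -s_sym // d_le_s //; exact: orthT. Qed.
Lemma d_sym A B : d B A = d A B.
Proof. by apply/le_anti; rewrite !d_sym_le. Qed.
Lemma d_tri A B C : d A C <= d A B + d B C.
Proof.
rewrite -lerBlDl; apply: d_lb => Q oQ; rewrite lerBlDl -lerBlDr.
apply: d_lb => P oP; rewrite lerBlDr.
by rewrite (le_trans (d_le_s _ _ (orthM oP oQ))) // s_tri.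
Qed.
Notation F := (fermat_dist d).
Notation symm := (@Defs.symmetric R m).

Lemma symm0 : symm 0. Proof. by rewrite /Defs.symmetric trmx0. Qed.

Lemma F_le n (A : 'I_n -> 'M_m) B : symm B -> F A <= \sum_i d (A i) B.
Proof. by move=> sB; apply: inf_img_le => // *; apply: sumr_ge0 => *; exact: d_ge0. Qed.
Lemma F_lb n (A : 'I_n -> 'M_m) c : (forall B, symm B -> c <= \sum_i d (A i) B) -> c <= F A.
Proof. by move=> h; apply: (le_inf_img (x := 0)) => //; exact: symm0. Qed.
Lemma F_ge0 n (A : 'I_n -> 'M_m) : 0 <= F A.
Proof. by apply: F_lb => *; apply: sumr_ge0 => *; exact: d_ge0. Qed.
Lemma F_const n A0 : symm A0 -> F (fun _ : 'I_n => A0) = 0.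
Proof.
move=> s0; apply/le_anti; rewrite F_ge0 andbT.
by rewrite (le_trans (F_le _ s0)) // big1 // => i _; rewrite d_refl.
Qed.
Lemma F_perm n (A : 'I_n -> 'M_m) (s : {perm 'I_n}) : F A = F (fun i => A (s i)).
Proof.
rewrite /fermat_dist; congr inf; apply: eq_imagel => B _.
exact: (reindex_inj (@perm_inj _ s)).
Qed.

Lemma F_tri2 n (A : 'I_n.+2 -> 'M_m) Z B1 B2 :
  \sum_j d (A j) B1 <=
  \sum_j d (if j == ord0 then Z else A j) B1 +
  \sum_j d (if j == (Ordinal (isT : (1 < n.+2)%N)) then Z else A j) B2.
Proof.
set i1 := Ordinal _.
have ne10 : i1 != ord0 by [].
rewrite (bigD1 ord0) //= [X in _ <= X + _](bigD1 ord0) //=.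
rewrite [X in _ <= _ + X + _](eq_bigr (fun j => d (A j) B1)); last by move=> j /negPf ->.
have H2 : d (A ord0) B2 + d Z B2 <=
   \sum_j d (if j == i1 then Z else A j) B2.
  rewrite (bigD1 ord0) //= (bigD1 i1) //=.
  rewrite addrA lerDl; apply: sumr_ge0 => *; exact: d_ge0.
rewrite [X in _ <= X + _]addrC -addrA [X in X <= _]addrC lerD2l.
apply: (le_trans (d_tri _ Z _)).
rewrite [X in X <= _]addrC lerD2l.
apply: le_trans H2; rewrite (d_sym B2 Z); exact: d_tri.
Qed.

Lemma F_tri n (A : 'I_n -> 'M_m) Z : (forall i, symm (A i)) ->
  F A <= \sum_i F (fun j => if j == i then Z else A j).
Proof.
case: n A => [|[|n]] A sA.
- rewrite big_ord0; apply: le_trans (F_le _ symm0) _; by rewrite big_ord0.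
- apply: le_trans (F_le _ (sA ord0)) _; rewrite big_ord1 d_refl.
  by apply: sumr_ge0 => *; exact: F_ge0.
set i1 : 'I_n.+2 := Ordinal (isT : (1 < n.+2)%N).
have key : F A <= F (fun j => if j == ord0 then Z else A j) +
                  F (fun j => if j == i1 then Z else A j).
  rewrite -lerBlDl; apply: F_lb => B2 sB2; rewrite lerBlDl addrC -lerBlDl.
  apply: F_lb => B1 sB1; rewrite lerBlDl.
  by rewrite (le_trans (F_le _ sB1)) // addrC F_tri2.
apply: (le_trans key).
rewrite (bigD1 ord0) //= (bigD1 i1) //= addrA lerDl.
by apply: sumr_ge0 => *; exact: F_ge0.
Qed.

Notation G := (galign_dist (s_fun N)).
Definition val n (A : 'I_n -> 'M_m) (P : 'I_n -> 'I_n -> 'M_m) :=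
  2^-1 * \sum_i \sum_j s_fun N (A i) (A j) (P i j).
Lemma val_ge0 n (A : 'I_n -> 'M_m) P : 0 <= val A P.
Proof.
by rewrite /val mulr_ge0 ?invr_ge0 ?ler0n // sumr_ge0 // => i _; rewrite sumr_ge0 // => *; exact: s_ge0.
Qed.
Lemma align1 n : align_family (fun _ _ : 'I_n => 1%:M : 'M[R]_m).
Proof. by split => // *; [exact: orth1 | rewrite mul1mx]. Qed.
Lemma G_le n (A : 'I_n -> 'M_m) P : align_family P -> G A <= val A P.
Proof. by move=> hP; apply: inf_img_le => // *; exact: val_ge0. Qed.
Lemma G_lb n (A : 'I_n -> 'M_m) c : (forall P, align_family P -> c <= val A P) -> c <= G A.
Proof. by move=> h; apply: (le_inf_img (x := fun _ _ => 1%:M)) => //; exact: align1. Qed.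
Lemma G_ge0 n (A : 'I_n -> 'M_m) : 0 <= G A.
Proof. by apply: G_lb => *; exact: val_ge0. Qed.
Lemma G_const n A0 : G (fun _ : 'I_n => A0) = 0.
Proof.
apply/le_anti; rewrite G_ge0 andbT (le_trans (G_le _ (align1 n))) //.
by rewrite /val big1 ?mulr0 // => i _; rewrite big1 // => j _; rewrite s_refl.
Qed.
Lemma G_perm_le n (A : 'I_n -> 'M_m) (s : {perm 'I_n}) : G A <= G (fun i => A (s i)).
Proof.
apply: G_lb => Q [hQ1 hQ2 hQ3].
set P := fun i j => Q ((s^-1)%g i) ((s^-1)%g j).
have hP : align_family P by split => *; rewrite /P ?hQ2 ?hQ3 //; exact: hQ1.
apply: (le_trans (G_le _ hP)); rewrite /val /P.
rewrite (reindex_inj (@perm_inj _ s)) le_eqVlt; apply/orP; left; apply/eqP.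
congr (_ * _); apply: eq_bigr => i _; rewrite (reindex_inj (@perm_inj _ s)).
by apply: eq_bigr => j _; rewrite !permK.
Qed.
Lemma G_perm n (A : 'I_n -> 'M_m) (s : {perm 'I_n}) : G A = G (fun i => A (s i)).
Proof.
apply/le_anti; rewrite G_perm_le /=.
have := G_perm_le (fun i => A (s i)) (s^-1)%g.
by rewrite (_ : (fun i => A (s ((s^-1)%g i))) = A) // ; apply/funext => i; rewrite permKV.
Qed.

Lemma s_conj A B A' B' P T U : orth P -> orth T -> orth U ->
  s_fun N A B (T *m P *m U^T) <=
  N (A *m T - T *m A') + s_fun N A' B' P + N (B *m U - U *m B').
Proof.
move=> oP oT oU; rewrite /s_fun.
have -> : A *m (T *m P *m U^T) - T *m P *m U^T *m B =
   (A *m T - T *m A') *m P *m U^T + T *m (A' *m P - P *m B') *m U^T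
   - T *m P *m (U^T *m B - B' *m U^T).
  rewrite !(mulmxBl, mulmxBr) !mulmxA; exact: zmod_id.
apply: (le_trans (NB _ _)).
apply: lerD; first (apply: (le_trans (ND _ _)); apply: lerD).
- by rewrite (NR _ (orthT oU)) (NR _ oP).
- by rewrite (NR _ (orthT oU)) (NL _ oT).
- rewrite -mulmxA (NL _ oT) (NL _ oP).
  rewrite -(NL _ oU) -(NR _ oU) mulmxBr mulmxBl !mulmxA orthKT // mul1mx.
  by rewrite -!mulmxA orthTK // mulmx1.
Qed.

Lemma sum2_split n (f : 'I_n.+1 -> 'I_n.+1 -> R) :
  \sum_i \sum_j f i j = f ord0 ord0 + \sum_(j | j != ord0) f ord0 j +
     \sum_(i | i != ord0) (f i ord0 + \sum_(j | j != ord0) f i j).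
Proof.
rewrite (bigD1 ord0) //= (bigD1 ord0) //=; congr (_ + _).
by apply: eq_bigr => i _; rewrite (bigD1 ord0).
Qed.
Lemma sum_const_ne0 n (e : R) : \sum_(j < n.+1 | j != ord0) e = e *+ n.
Proof.
apply: (@addrI _ e).
have H : \sum_(j < n.+1) e = e + \sum_(j < n.+1 | j != ord0) e by rewrite (bigD1 ord0).
by rewrite -mulrS -H sumr_const card_ord.
Qed.

Lemma half_aux (x y : R) : 2^-1 * (x + y + y) = 2^-1 * x + y.
Proof. lra. Qed.
Lemma add_aux (a b c d y : R) : a <= c + y -> b <= d + y -> a + b <= c + (d + (y + y)).
Proof. lra. Qed.
Lemma G_key n (A : 'I_n.+1 -> 'M_m) Z P Q : align_family P -> orth Q ->
  G A <= val (fun j => if j == ord0 then Z else A j) P + n%:R * s_fun N (A ord0) Z Q.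
Proof.
move=> [hP1 hP2 hP3] oQ.
set A' := fun j => if j == ord0 then Z else A j.
set e := s_fun N (A ord0) Z Q.
set T := fun i : 'I_n.+1 => if i == ord0 then Q else 1%:M.
have oT i : orth (T i) by rewrite /T; case: eqP => _; [exact: oQ | exact: orth1].
set P' := fun i j => T i *m P i j *m (T j)^T.
have hP' : align_family P'.
  split.
  - by move=> i j; apply: orthM; [apply: orthM | apply: orthT].
  - move=> i j k; rewrite /P' !mulmxA -(mulmxA _ (T k)^T) orthTK // mulmx1.
    by rewrite -(mulmxA (T i)) hP2.
  - by move=> i; rewrite /P' hP3 mulmx1 orthKT.
have g i : N (A i *m T i - T i *m A' i) = if i == ord0 then e else 0.
  rewrite /T /A'; case: eqP => [-> //|_].
  by rewrite mulmx1 mul1mx subrr N0.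
have fb i j : s_fun N (A i) (A j) (P' i j) <=
    (if i == ord0 then e else 0) + s_fun N (A' i) (A' j) (P i j) +
    (if j == ord0 then e else 0).
  by rewrite -g -g; apply: s_conj.
apply: (le_trans (G_le _ hP')).
set h := fun i j => s_fun N (A' i) (A' j) (P i j).
have hge0 i j : 0 <= h i j by exact: s_ge0.
suff H : \sum_i \sum_j s_fun N (A i) (A j) (P' i j) <=
         \sum_i \sum_j h i j + e *+ n + e *+ n.
  rewrite /val.
  have : 2^-1 * \sum_i \sum_j s_fun N (A i) (A j) (P' i j) <=
         2^-1 * (\sum_i \sum_j h i j + e *+ n + e *+ n).
    by rewrite ler_pM2l // invr_gt0 ltr0n.
  move=> H'; apply: (le_trans H'); rewrite /h half_aux mulr_natl; exact: lexx.
rewrite !sum2_split /=.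
have f00 : s_fun N (A ord0) (A ord0) (P' ord0 ord0) = 0.
  by rewrite (_ : P' ord0 ord0 = 1%:M) ?s_refl //; case: hP'.
rewrite f00 -!addrA; apply: lerD => //.
have E1 : \sum_(j | j != ord0) s_fun N (A ord0) (A j) (P' ord0 j) <=
          \sum_(j | j != ord0) h ord0 j + e *+ n.
  rewrite -sum_const_ne0 -big_split /=; apply: ler_sum => j /negPf j0.
  by rewrite (le_trans (fb _ _)) // eqxx j0 addr0 addrC.
have E2 : \sum_(i | i != ord0) (s_fun N (A i) (A ord0) (P' i ord0) +
            \sum_(j | j != ord0) s_fun N (A i) (A j) (P' i j)) <=
          \sum_(i | i != ord0) (h i ord0 + \sum_(j | j != ord0) h i j) + e *+ n.
  rewrite -sum_const_ne0 -big_split /=; apply: ler_sum => i /negPf i0.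
  rewrite addrAC lerD //; first by rewrite (le_trans (fb _ _)) // eqxx i0 add0r.
  by apply: ler_sum => j /negPf j0; rewrite (le_trans (fb _ _)) // i0 j0 add0r addr0.
exact: add_aux E1 E2.
Qed.

Lemma sum2_ge n (f : 'I_n -> 'I_n -> R) a b : (forall i j, 0 <= f i j) -> a != b ->
  f a b + f b a <= \sum_i \sum_j f i j.
Proof.
move=> f0 ab.
have h1 i j : f i j <= \sum_j f i j.
  by rewrite (bigD1 j) //= lerDl sumr_ge0.
rewrite (bigD1 a) //= [X in _ <= _ + X](bigD1 b) /=; last by rewrite eq_sym.
apply: (le_trans (lerD (h1 a b) (h1 b a))); rewrite addrA lerDl.
by apply: sumr_ge0 => i _; apply: sumr_ge0.
Qed.

Lemma G_lowd n (A : 'I_n.+1 -> 'M_m) Z k : k != ord0 ->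
  d (A ord0) Z <= G (fun j => if j == k then Z else A j).
Proof.
move=> k0; apply: G_lb => P [hP1 hP2 hP3].
have Pk0 : P k ord0 = (P ord0 k)^T.
  have [u ->] := hP1 ord0 k.
  by rewrite -[P k ord0](mulKmx u) hP2 hP3 mulmx1.
apply: (le_trans (d_le_s _ _ (hP1 ord0 k))).
rewrite /val.
have := sum2_ge (f := fun i j => s_fun N (if i == k then Z else A i)
   (if j == k then Z else A j) (P i j)) (fun i j => s_ge0 _ _ _) k0.
have k0' : (ord0 == k) = false by rewrite eq_sym (negPf k0).
rewrite /= eqxx k0' Pk0 s_sym; last exact: hP1.
move=> H; rewrite -[X in X <= _](mulKf (_ : 2 != 0 :> R)) ?pnatr_eq0 //.
rewrite ler_pM2l ?invr_gt0 ?ltr0n // (le_trans _ H) //.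
by rewrite mulr_natl mulr2n.
Qed.

Lemma G_tri n (A : 'I_n -> 'M_m) Z :
  G A <= \sum_i G (fun j => if j == i then Z else A j).
Proof.
case: n A => [|n] A.
  by rewrite big_ord0 (le_trans (G_le _ (align1 0))) // /val big_ord0 mulr0.
set A0 := fun j => if j == ord0 then Z else A j.
have step Q : orth Q -> G A - G A0 <= n%:R * s_fun N (A ord0) Z Q.
  move=> oQ; rewrite lerBlDl -lerBlDr; apply: G_lb => P hP.
  by rewrite lerBlDr (G_key _ _ hP oQ).
have H1 : G A - G A0 <= n%:R * d (A ord0) Z.
  case: n A A0 step => [|n] A A0 step.
    by rewrite mul0r; have := step _ orth1; rewrite mul0r.
  rewrite mulrC -ler_pdivrMr ?ltr0n //; apply: d_lb => Q oQ.
  by rewrite ler_pdivrMr ?ltr0n // mulrC step.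
rewrite (bigD1 ord0) //= -/A0 addrC -lerBlDr (le_trans H1) //.
rewrite mulr_natl -sum_const_ne0; apply: ler_sum => k k0.
exact: G_lowd.
Qed.
End Mat.

Theorem theorem5 (R : realType) (m n : nat) (N : 'M[R]_m -> R) :
  matrix_norm N -> orth_invariant N ->
  pseudo_n_metric (fermat_dist (d_fun N) (n:=n)) /\
  pseudo_n_metric (galign_dist (s_fun N) (n:=n)).
Proof.
move=> hN hI; split; split.
- by move=> A _; apply: F_ge0.
- by move=> A0 sA0; apply: F_const.
- by move=> A s _; apply: F_perm.
- by move=> A Z sA _; apply: F_tri.
- by move=> A _; apply: G_ge0.
- by move=> A0 _; apply: G_const.
- by move=> A s _; apply: G_perm.
- by move=> A Z _ _; apply: G_tri.
Qed.
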